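(* The set of singular points of the collinearity variety $\tilde{C}_P=0$ remains invariant under Euclidean motions, i.e. under maps $(\mathbf{k}'_1,\dots,\mathbf{k}'_6)\mapsto(\mathbf{R}\mathbf{k}'_1+\mathbf{t},\dots,\mathbf{R}\mathbf{k}'_6+\mathbf{t})$ with $\mathbf{R}\in SO(2)$ and $\mathbf{t}\in\mathbb{R}^2$. Moreover, a point of $\tilde{C}_P=0$ is a singular point if and only if $\mathbf{k}'_4=\mathbf{k}'_5=\mathbf{k}'_6$.
   Context: A configuration is $K'=(\mathbf{k}'_1,\dots,\mathbf{k}'_6)$ with $\mathbf{k}'_i=(c_i,d_i)^T\in\mathbb{R}^2$, viewed as a point of $\mathbb{R}^{12}$. The given base has anchor points $(0,0),(x_2,0),(x_3,y_3)$ with real design parameters $x_2\neq0$, $x_3$, $y_3$. Define $C_P=\det\begin{pmatrix}1&1&1\\ c_4&c_5&c_6\\ d_4&d_5&d_6\end{pmatrix}$, $E_B=\|\mathbf{k}'_2-\mathbf{k}'_1\|^2-x_2^2$, $F_1=(c_2-c_1)x_3+(d_1-d_2)y_3+(c_1-c_3)x_2$, $F_2=(d_2-d_1)x_3+(c_2-c_1)y_3+(d_1-d_3)x_2$. The variety $\tilde{C}_P=0$ is the common zero set of $C_P,E_B,F_1,F_2$ in $\mathbb{R}^{12}$ (configurations with collinear platform points whose base is a Euclidean image of the given base). A singular point of $\tilde{C}_P=0$ is a point of it at which the gradients of $C_P,E_B,F_1,F_2$ with respect to $c_1,\dots,c_6,d_1,\dots,d_6$ are linearly dependent. *)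

(* Defs.v *)
From mathcomp Require Import all_boot all_order all_algebra.
From mathcomp Require Import mpoly.
Set Implicit Arguments. Unset Strict Implicit. Unset Printing Implicit Defensive.
Import Order.TTheory GRing.Theory Num.Theory.
Local Open Scope ring_scope.

Section Collinearity.
Variable R : realFieldType.

(* Coordinates of R^12 = (c_1,...,c_6,d_1,...,d_6): c_k is coordinate k-1,
   d_k is coordinate 6+k-1 (k = 1..6, one-based as in the paper). *)
Definition cI (k : nat) : 'I_12 := inord k.-1.
Definition dI (k : nat) : 'I_12 := inord (6 + k.-1).

Definition Pc (k : nat) : {mpoly R[12]} := 'X_(cI k).
Definition Pd (k : nat) : {mpoly R[12]} := 'X_(dI k).

Definition CP : {mpoly R[12]} :=
  \det (\matrix_(i < 3, j < 3)
          (if i == 0 :> nat then 1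
           else if i == 1 :> nat then Pc (j + 4) else Pd (j + 4))).

Definition EB (x2 : R) : {mpoly R[12]} :=
  (Pc 2 - Pc 1) ^+ 2 + (Pd 2 - Pd 1) ^+ 2 - (x2 ^+ 2)%:MP.

Definition F1 (x2 x3 y3 : R) : {mpoly R[12]} :=
  (Pc 2 - Pc 1) * x3%:MP + (Pd 1 - Pd 2) * y3%:MP + (Pc 1 - Pc 3) * x2%:MP.

Definition F2 (x2 x3 y3 : R) : {mpoly R[12]} :=
  (Pd 2 - Pd 1) * x3%:MP + (Pc 2 - Pc 1) * y3%:MP + (Pd 1 - Pd 3) * x2%:MP.

Definition ev (p : {mpoly R[12]}) (K : 'rV[R]_12) : R := p.@[fun j => K 0 j].

Definition grad (p : {mpoly R[12]}) (K : 'rV[R]_12) : 'rV[R]_12 :=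
  \row_(j < 12) ev (mderiv j p) K.

Definition on_CPt (x2 x3 y3 : R) (K : 'rV[R]_12) : Prop :=
  [/\ ev CP K = 0, ev (EB x2) K = 0, ev (F1 x2 x3 y3) K = 0 & ev (F2 x2 x3 y3) K = 0].

Definition singular_CPt (x2 x3 y3 : R) (K : 'rV[R]_12) : Prop :=
  on_CPt x2 x3 y3 K /\
  exists a1 a2 a3 a4 : R, ~ (a1 = 0 /\ a2 = 0 /\ a3 = 0 /\ a4 = 0) /\
    a1 *: grad CP K + a2 *: grad (EB x2) K + a3 *: grad (F1 x2 x3 y3) K
      + a4 *: grad (F2 x2 x3 y3) K = 0.

Definition SO2 (Q : 'M[R]_2) : Prop := Q^T *m Q = 1%:M /\ \det Q = 1.

Definition kpt (K : 'rV[R]_12) (k : nat) : 'cV[R]_2 :=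
  \col_(i < 2) (if i == 0 :> nat then K 0 (cI k) else K 0 (dI k)).

Definition motion (Q : 'M[R]_2) (t : 'cV[R]_2) (K : 'rV[R]_12) : 'rV[R]_12 :=
  \row_(j < 12)
    (if (j < 6)%N then (Q *m kpt K j.+1 + t) 0 0
     else (Q *m kpt K (j - 5)%N + t) 1 0).

End Collinearity.

(* Main.v *)
Require Import Defs.
From mathcomp Require Import all_boot all_order all_algebra.
From mathcomp Require Import mpoly.
From mathcomp Require Import ring lra.
Import Order.TTheory GRing.Theory Num.Theory.
Set Implicit Arguments. Unset Strict Implicit. Unset Printing Implicit Defensive.
Local Open Scope ring_scope.

Lemma mderivXi (R : realFieldType) n (i j : 'I_n) :
  mderiv j ('X_i : {mpoly R[n]}) = (i == j)%:R%:MP.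
Proof.
rewrite mderivX mnm1E; case: eqP => [->|_].
  have -> : (U_(j) - U_(j) = 0)%MM by apply/mnmP => k; rewrite mnmBE mnm0E subnn.
  by rewrite mpolyX0 scale1r mpolyC1.
by rewrite scale0r mpolyC0.
Qed.

Lemma det3 (T : comNzRingType) (A : 'M[T]_3) : 
  let a (i j : nat) := A (inord i) (inord j) in
  \det A = a 0%N 0%N * (a 1%N 1%N * a 2%N 2%N - a 1%N 2%N * a 2%N 1%N)
         - a 0%N 1%N * (a 1%N 0%N * a 2%N 2%N - a 1%N 2%N * a 2%N 0%N)
         + a 0%N 2%N * (a 1%N 0%N * a 2%N 1%N - a 1%N 1%N * a 2%N 0%N).
Proof.
move=> a.
have HA : forall i j, A i j = a i j by move=> i j; rewrite /a !inord_val.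
rewrite (expand_det_row _ 0) !big_ord_recr big_ord0 /cofactor.
rewrite !(expand_det_row _ 0) !big_ord_recr !big_ord0 /cofactor !det_mx11 !mxE.
rewrite !HA /= /a /bump /=; ring.
Qed.

Lemma det2 (T : comNzRingType) (A : 'M[T]_2) : 
  let a (i j : nat) := A (inord i) (inord j) in
  \det A = a 0%N 0%N * a 1%N 1%N - a 0%N 1%N * a 1%N 0%N.
Proof.
move=> a.
have HA : forall i j, A i j = a i j by move=> i j; rewrite /a !inord_val.
rewrite (expand_det_row _ 0) !big_ord_recr big_ord0 /cofactor !det_mx11 !mxE.
rewrite !HA /= /a /bump /=; ring.
Qed.

Lemma cIv k : (k < 13)%N -> nat_of_ord (cI k) = k.-1.
Proof. by move=> h; rewrite /cI inordK //; case: k h => //= k; rewrite ltnS => /ltnW. Qed.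
Lemma dIv k : (k < 7)%N -> nat_of_ord (dI k) = (6 + k.-1)%N.
Proof. by move=> h; rewrite /dI inordK //; case: k h => //= k; rewrite !ltnS => h; rewrite addSn !ltnS; apply: (leq_trans h). Qed.

Lemma CPE (R : realFieldType) : CP R = Pc R 5 * Pd R 6 - Pc R 6 * Pd R 5 - (Pc R 4 * Pd R 6 - Pc R 6 * Pd R 4) + (Pc R 4 * Pd R 5 - Pc R 5 * Pd R 4).
Proof.
rewrite /CP det3 !mxE !inordK //=.
ring.
Qed.

Section S.
Variable R : realFieldType.
Implicit Types K : 'rV[R]_12.
Definition cc K k := K 0 (cI k).
Definition dd K k := K 0 (dI k).
Definition dc (k : nat) (j : 'I_12) : R := (cI k == j)%:R.
Definition ddl (k : nat) (j : 'I_12) : R := (dI k == j)%:R.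

Ltac evs := rewrite /ev /Pc /Pd ?expr2 !(mevalD, mevalB, mevalM, mevalN, mevalXU, mevalC).
Ltac ders := rewrite /Pc /Pd ?expr2 !(mderivD, mderivB, mderivM, mderivN, mderivXi, mderivC).

Lemma evCP K : ev (CP R) K = cc K 5 * dd K 6 - cc K 6 * dd K 5 - (cc K 4 * dd K 6 - cc K 6 * dd K 4) + (cc K 4 * dd K 5 - cc K 5 * dd K 4).
Proof. by rewrite CPE; evs. Qed.
Lemma evEB x2 K : ev (EB x2) K = (cc K 2 - cc K 1) ^+ 2 + (dd K 2 - dd K 1) ^+ 2 - x2 ^+ 2.
Proof. by rewrite /EB; evs; rewrite /cc /dd; ring. Qed.
Lemma evF1 x2 x3 y3 K : ev (F1 x2 x3 y3) K = (cc K 2 - cc K 1) * x3 + (dd K 1 - dd K 2) * y3 + (cc K 1 - cc K 3) * x2.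
Proof. by rewrite /F1; evs. Qed.
Lemma evF2 x2 x3 y3 K : ev (F2 x2 x3 y3) K = (dd K 2 - dd K 1) * x3 + (cc K 2 - cc K 1) * y3 + (dd K 1 - dd K 3) * x2.
Proof. by rewrite /F2; evs. Qed.

Lemma gCP K j : grad (CP R) K 0 j =
  (dc 5 j * dd K 6 + cc K 5 * ddl 6 j) - (dc 6 j * dd K 5 + cc K 6 * ddl 5 j)
  - ((dc 4 j * dd K 6 + cc K 4 * ddl 6 j) - (dc 6 j * dd K 4 + cc K 6 * ddl 4 j))
  + ((dc 4 j * dd K 5 + cc K 4 * ddl 5 j) - (dc 5 j * dd K 4 + cc K 5 * ddl 4 j)).
Proof. rewrite mxE CPE; ders; evs; rewrite /dc /ddl /cc /dd; ring. Qed.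
Lemma gEB x2 K j : grad (EB x2) K 0 j =
  2 * (cc K 2 - cc K 1) * (dc 2 j - dc 1 j) + 2 * (dd K 2 - dd K 1) * (ddl 2 j - ddl 1 j).
Proof. rewrite mxE /EB; ders; evs; rewrite /dc /ddl /cc /dd; ring. Qed.
Lemma gF1 x2 x3 y3 K j : grad (F1 x2 x3 y3) K 0 j =
  (dc 2 j - dc 1 j) * x3 + (ddl 1 j - ddl 2 j) * y3 + (dc 1 j - dc 3 j) * x2.
Proof. rewrite mxE /F1; ders; evs; rewrite /dc /ddl /cc /dd; ring. Qed.
Lemma gF2 x2 x3 y3 K j : grad (F2 x2 x3 y3) K 0 j =
  (ddl 2 j - ddl 1 j) * x3 + (dc 2 j - dc 1 j) * y3 + (ddl 1 j - ddl 3 j) * x2.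
Proof. rewrite mxE /F2; ders; evs; rewrite /dc /ddl /cc /dd; ring. Qed.
End S.

Section T.
Variable R : realFieldType.
Implicit Types K : 'rV[R]_12.

Lemma lin4 (g1 g2 g3 g4 : 'rV[R]_12) a1 a2 a3 a4 j :
  (a1 *: g1 + a2 *: g2 + a3 *: g3 + a4 *: g4) 0 j = a1 * g1 0 j + a2 * g2 0 j + a3 * g3 0 j + a4 * g4 0 j.
Proof. by rewrite !mxE. Qed.

Lemma dcv k j : (k < 13)%N -> dc R k j = (k.-1 == nat_of_ord j)%:R.
Proof. by move=> h; rewrite /dc -(@cIv k h). Qed.
Lemma ddv k j : (k < 7)%N -> ddl R k j = ((6 + k.-1)%N == nat_of_ord j)%:R.
Proof. by move=> h; rewrite /ddl -(@dIv k h). Qed.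

Definition eqs K := [/\ cc K 4 = cc K 5, cc K 5 = cc K 6, dd K 4 = dd K 5 & dd K 5 = dd K 6].

Lemma sing_iff x2 x3 y3 (hx2 : x2 != 0) K : on_CPt x2 x3 y3 K ->
  (singular_CPt x2 x3 y3 K <-> eqs K).
Proof.
move=> hon; split.
  move=> [_ [a1 [a2 [a3 [a4 [Hnz H]]]]]].
  have E : forall j, a1 * grad (CP R) K 0 j + a2 * grad (EB x2) K 0 j + a3 * grad (F1 x2 x3 y3) K 0 j + a4 * grad (F2 x2 x3 y3) K 0 j = 0.
    by move=> j; move: (congr1 (fun M : 'rV[R]_12 => M 0 j) H); rewrite lin4 => ->; rewrite mxE.
  have [hCP hEB hF1 hF2] := hon; rewrite evEB in hEB.
  have e3 := E (cI 3); rewrite gCP gEB gF1 gF2 !dcv // !ddv // cIv //= in e3.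
  have f3 := E (dI 3); rewrite gCP gEB gF1 gF2 !dcv // !ddv // dIv //= in f3.
  have h3 : a3 * x2 = 0 by lra.
  have h4 : a4 * x2 = 0 by lra.
  move/eqP: h3; rewrite mulf_eq0 (negbTE hx2) orbF => /eqP a30; subst a3.
  move/eqP: h4; rewrite mulf_eq0 (negbTE hx2) orbF => /eqP a40; subst a4.
  have e2 := E (cI 2); rewrite gCP gEB gF1 gF2 !dcv // !ddv // cIv //= in e2.
  have f2 := E (dI 2); rewrite gCP gEB gF1 gF2 !dcv // !ddv // dIv //= in f2.
  have hc : a2 * (cc K 2 - cc K 1) = 0 by lra.
  have hd : a2 * (dd K 2 - dd K 1) = 0 by lra.
  have : a2 * x2 ^+ 2 = (cc K 2 - cc K 1) * (a2 * (cc K 2 - cc K 1)) + (dd K 2 - dd K 1) * (a2 * (dd K 2 - dd K 1)) - a2 * ((cc K 2 - cc K 1) ^+ 2 + (dd K 2 - dd K 1) ^+ 2 - x2 ^+ 2) by ring.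
  rewrite hc hd hEB !mulr0 subr0 addr0 => /eqP; rewrite mulf_eq0 expf_eq0 (negbTE hx2) andbF orbF => /eqP a20; subst a2.
  have a1n : a1 != 0 by apply/eqP => a10; apply: Hnz.
  have key : forall u v, a1 * (u - v) = 0 -> u = v.
    by move=> u v /eqP; rewrite mulf_eq0 (negbTE a1n) /= subr_eq0 => /eqP.
  have g4 := E (cI 4); rewrite gCP gEB gF1 gF2 !dcv // !ddv // cIv //= in g4.
  have g5 := E (cI 5); rewrite gCP gEB gF1 gF2 !dcv // !ddv // cIv //= in g5.
  have g6 := E (dI 4); rewrite gCP gEB gF1 gF2 !dcv // !ddv // dIv //= in g6.
  have g7 := E (dI 5); rewrite gCP gEB gF1 gF2 !dcv // !ddv // dIv //= in g7.
  split.
  - by apply: key; lra.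
  - by apply: key; lra.
  - by apply: key; lra.
  - by apply: key; lra.
move=> [h45 h56 k45 k56]; split => //.
exists 1, 0, 0, 0; split; first by case=> /eqP; rewrite oner_eq0.
apply/rowP => j; rewrite lin4 gCP gEB gF1 gF2 [RHS]mxE h45 h56 k45 k56; ring.
Qed.
End T.

From mathcomp Require Import zify.

Section M.
Variable R : realFieldType.
Implicit Types (K : 'rV[R]_12) (Q : 'M[R]_2) (t : 'cV[R]_2).

Lemma ccM Q t K k : (0 < k < 7)%N ->
  cc (motion Q t K) k = Q (inord 0) (inord 0) * cc K k + Q (inord 0) (inord 1) * dd K k + t (inord 0) (inord 0).
Proof.
move=> hk.
pose q (i j : nat) := Q (inord i) (inord j).
pose tq (i j : nat) := t (inord i) (inord j).
have HQ : forall i j, Q i j = q i j by move=> i j; rewrite /q !inord_val.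
have Ht : forall i j, t i j = tq i j by move=> i j; rewrite /tq !inord_val.
rewrite /cc /motion mxE cIv; last by lia.
have -> : (k.-1 < 6)%N by lia.
have -> : (k.-1).+1 = k by lia.
rewrite !mxE !big_ord_recl big_ord0 !mxE /= !HQ !Ht /q /tq /=.
rewrite ?inordK // /bump /= /cc /dd; ring.
Qed.

Lemma ddM Q t K k : (0 < k < 7)%N ->
  dd (motion Q t K) k = Q (inord 1) (inord 0) * cc K k + Q (inord 1) (inord 1) * dd K k + t (inord 1) (inord 0).
Proof.
move=> hk.
pose q (i j : nat) := Q (inord i) (inord j).
pose tq (i j : nat) := t (inord i) (inord j).
have HQ : forall i j, Q i j = q i j by move=> i j; rewrite /q !inord_val.
have Ht : forall i j, t i j = tq i j by move=> i j; rewrite /tq !inord_val.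
rewrite /dd /motion mxE dIv; last by lia.
have -> : (6 + k.-1 < 6)%N = false by lia.
have -> : (6 + k.-1 - 5)%N = k by lia.
rewrite !mxE !big_ord_recl big_ord0 !mxE /= !HQ !Ht /q /tq /=.
rewrite ?inordK // /bump /= /cc /dd; ring.
Qed.

Definition rot Q := [/\ Q (inord 1) (inord 1) = Q (inord 0) (inord 0),
   Q (inord 0) (inord 1) = - Q (inord 1) (inord 0) &
   Q (inord 0) (inord 0) ^+ 2 + Q (inord 1) (inord 0) ^+ 2 = 1].

Lemma SO2rot Q : SO2 Q -> rot Q.
Proof.
case=> /matrixP H1 H2.
pose q (i j : nat) := Q (inord i) (inord j).
have HQ : forall i j, Q i j = q i j by move=> i j; rewrite /q !inord_val.
have e00 := H1 (inord 0) (inord 0).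
have e11 := H1 (inord 1) (inord 1).
have e01 := H1 (inord 0) (inord 1).
rewrite !mxE !big_ord_recl big_ord0 !mxE /= !HQ /q /= ?inordK // /bump /= -(inj_eq val_inj) /= ?inordK // in e00.
rewrite !mxE !big_ord_recl big_ord0 !mxE /= !HQ /q /= ?inordK // /bump /= -(inj_eq val_inj) /= ?inordK // in e11.
rewrite !mxE !big_ord_recl big_ord0 !mxE /= !HQ /q /= ?inordK // /bump /= -(inj_eq val_inj) /= ?inordK // in e01.
rewrite det2 /= in H2.
set a := Q (inord 0) (inord 0) in e00 e11 e01 H2 *.
set b := Q (inord 1) (inord 0) in e00 e11 e01 H2 *.
set c := Q (inord 0) (inord 1) in e00 e11 e01 H2 *.
set d := Q (inord 1) (inord 1) in e00 e11 e01 H2 *.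
have p1 := congr1 (fun z => d * z) e00.
have p2 := congr1 (fun z => b * z) e01.
have p3 := congr1 (fun z => a * z) H2.
have p4 := congr1 (fun z => c * z) e00.
have p5 := congr1 (fun z => a * z) e01.
have p6 := congr1 (fun z => b * z) H2.
have p7 := congr1 (fun z => 1 * z) e00.
simpl in p1, p2, p3, p4, p5, p6, p7.
split; rewrite -/a -/b -/c -/d.
- lra.
- lra.
- lra.
Qed.

Lemma rotT Q : rot Q -> rot Q^T.
Proof.
case=> h1 h2 h3; split; rewrite !mxE.
- exact: h1.
- by rewrite h2 opprK.
- by rewrite h2 sqrrN.
Qed.

End M.

Section N.
Variable R : realFieldType.
Implicit Types (K : 'rV[R]_12) (Q : 'M[R]_2) (t : 'cV[R]_2).

Lemma on_motion Q t K x2 x3 y3 : rot Q -> on_CPt x2 x3 y3 K -> on_CPt x2 x3 y3 (motion Q t K).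
Proof.
case=> hd hc hs [h1 h2 h3 h4]; rewrite evCP in h1; rewrite evEB in h2; rewrite evF1 in h3; rewrite evF2 in h4.
set a := Q (inord 0) (inord 0) in hd hs *.
set b := Q (inord 1) (inord 0) in hc hs *.
have q1 := congr1 (fun z => (a ^+ 2 + b ^+ 2) * z) h1.
have q2 := congr1 (fun z => (a ^+ 2 + b ^+ 2) * z) h2.
have q3 := congr1 (fun z => z * x2 ^+ 2) hs.
have q4 := congr1 (fun z => a * z) h3.
have q5 := congr1 (fun z => b * z) h3.
have q6 := congr1 (fun z => a * z) h4.
have q7 := congr1 (fun z => b * z) h4.
simpl in q1, q2, q3, q4, q5, q6, q7.
split; rewrite ?evCP ?evEB ?evF1 ?evF2 !ccM // !ddM // hd hc -/a -/b.
- lra.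
- lra.
- lra.
- lra.
Qed.

Lemma eqs_motion Q t K : eqs K -> eqs (motion Q t K).
Proof. by case=> h1 h2 h3 h4; split; rewrite ?ccM ?ddM // ?h1 ?h2 ?h3 ?h4. Qed.

Lemma ord12 (j : 'I_12) : exists k, (0 < k < 7)%N /\ (j = cI k \/ j = dI k).
Proof.
case: (ltnP j 6) => hj.
  exists j.+1; split; first lia.
  by left; apply: val_inj; rewrite /= cIv //; lia.
exists (j - 5)%N; split; first by have := ltn_ord j; lia.
right; apply: val_inj; rewrite /= dIv; last by have := ltn_ord j; lia.
by have := ltn_ord j; lia.
Qed.

Lemma motion_inv Q t K : rot Q -> motion Q t (motion Q^T (- (Q^T *m t)) K) = K.
Proof.
case=> hd hc hs.
pose tq (i j : nat) := t (inord i) (inord j).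
have Ht : forall i j, t i j = tq i j by move=> i j; rewrite /tq !inord_val.
pose q (i j : nat) := Q (inord i) (inord j).
have HQ : forall i j, Q i j = q i j by move=> i j; rewrite /q !inord_val.
apply/rowP => j; have [k [hk [->|->]]] := ord12 j.
- rewrite -[LHS]/(cc _ k) ccM // ccM // ddM // !mxE !big_ord_recl !big_ord0 !mxE /=.
  rewrite !HQ !Ht /q /tq /= ?inordK // /bump /= ?addn0 hd hc.
  set a := Q (inord 0) (inord 0) in hs *.
  set b := Q (inord 1) (inord 0) in hs *.
  have q1 := congr1 (fun z => z * (cc K k - t (inord 0) (inord 0))) hs.
  simpl in q1; rewrite /cc in q1 *.
  lra.
- rewrite -[LHS]/(dd _ k) ddM // ccM // ddM // !mxE !big_ord_recl !big_ord0 !mxE /=.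
  rewrite !HQ !Ht /q /tq /= ?inordK // /bump /= ?addn0 hd hc.
  set a := Q (inord 0) (inord 0) in hs *.
  set b := Q (inord 1) (inord 0) in hs *.
  have q1 := congr1 (fun z => z * (dd K k - t (inord 1) (inord 0))) hs.
  simpl in q1; rewrite /dd in q1 *.
  lra.
Qed.

Lemma kptP K k l : kpt K k = kpt K l <-> cc K k = cc K l /\ dd K k = dd K l.
Proof.
split => [h|[h1 h2]].
  have e0 := congr1 (fun v : 'cV[R]_2 => v (inord 0) 0) h.
  have e1 := congr1 (fun v : 'cV[R]_2 => v (inord 1) 0) h.
  by rewrite /= !mxE !inordK // in e0 e1.
by apply/colP => i; rewrite !mxE; case: ifP.
Qed.
End N.

Unset Implicit Arguments.

Theorem theorem9 (R : realFieldType) (x2 x3 y3 : R) (hx2 : x2 != 0) :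
  (forall (Q : 'M[R]_2) (t : 'cV[R]_2), SO2 Q ->
     (forall K, singular_CPt x2 x3 y3 K -> singular_CPt x2 x3 y3 (motion Q t K)) /\
     (forall K', singular_CPt x2 x3 y3 K' ->
        exists K, singular_CPt x2 x3 y3 K /\ motion Q t K = K')) /\
  (forall K : 'rV[R]_12, on_CPt x2 x3 y3 K ->
     (singular_CPt x2 x3 y3 K <-> (kpt K 4 = kpt K 5 /\ kpt K 5 = kpt K 6))).
Proof.
have pres : forall (Q : 'M[R]_2) (t : 'cV[R]_2) K, rot Q ->
    singular_CPt x2 x3 y3 K -> singular_CPt x2 x3 y3 (motion Q t K).
  move=> Q t K rQ hK.
  have hon := hK.1.
  have he := (sing_iff hx2 hon).1 hK.
  have hon' := on_motion t rQ hon.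
  by apply/(sing_iff hx2 hon'); apply: eqs_motion.
split.
  move=> Q t hQ; have rQ := SO2rot hQ; split.
    by move=> K; apply: pres.
  move=> K' hK'; exists (motion Q^T (- (Q^T *m t)) K'); split.
    by apply: pres => //; apply: rotT.
  exact: motion_inv.
move=> K hon; rewrite (sing_iff hx2 hon) !kptP.
split; first by case=> h1 h2 h3 h4.
by case=> [[h1 h3] [h2 h4]]; split.
Qed.
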